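(* Let $\models$ be an intersective mixed consequence truth-relation on a finite set $V$ of truth values (constant expressive setting). Then $\models$ admits a G-conditional iff every minimal representation $\models_{\mathcal{D}_p^1,\mathcal{D}_c^1}\cap\dots\cap\models_{\mathcal{D}_p^K,\mathcal{D}_c^K}$ of it satisfies the following, where the list of sets of designated values is $\mathcal{D}_p^1,\mathcal{D}_c^1,\dots,\mathcal{D}_p^K,\mathcal{D}_c^K$: (DC1) for each set $\mathcal{D}_i$ in the list, either some truth value belongs to $\mathcal{D}_i$ and to no other set in the list, or $\mathcal{D}_i$ is included in another, distinct set of the list; (DC2) for every non-empty sublist $\mathcal{D}'_1,\dots,\mathcal{D}'_{n'}$ there is $x\in V$ such that for every set $\mathcal{D}_i$ of the list: $x\in\mathcal{D}_i$ iff $\exists i'$ with $\mathcal{D}'_{i'}\subseteq\mathcal{D}_i$; (N1) for $i\neq j$ there is no inclusion $\mathcal{D}_p^i\subseteq\mathcal{D}_p^j$ nor $\mathcal{D}_c^i\subseteq\mathcal{D}_c^j$; (N2) for all $i,j$: if $\mathcal{D}_p^i\subseteq\mathcal{D}_c^j$ then $\mathcal{D}_p^j\subseteq\mathcal{D}_c^i$, and if $\mathcal{D}_c^j\subseteq\mathcal{D}_p^i$ then $\mathcal{D}_c^i\subseteq\mathcal{D}_p^j$.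
   Context: $V$ contains distinct $1,0$; sets of designated values: $\mathcal{D}\subseteq V$, $1\in\mathcal{D}$, $0\notin\mathcal{D}$. $\gamma\models_{\mathcal{D}_p,\mathcal{D}_c}\delta$ iff ($\gamma\subseteq\mathcal{D}_p\Rightarrow\delta\cap\mathcal{D}_c\neq\emptyset$). An intersective mixed truth-relation is a finite intersection of such; a representation is a list of mixed relations whose intersection it is, minimal if of least possible length. Semantics: valuations mapping atoms to $V$, connectives interpreted by fixed truth functions, extended compositionally, every assignment to finitely many distinct atoms realized; constant expressive: every value is the constant value of some formula. $\Gamma\vdash\Delta$ iff $v(\Gamma)\models v(\Delta)$ for all $v$. A G-conditional is a binary connective $\to$ (interpreted by some truth function) with, for all $\Gamma,\Delta,A,B$: $\Gamma\vdash\{A\to B\}\cup\Delta$ iff $\Gamma\cup\{A\}\vdash\{B\}\cup\Delta$; and $\Gamma\cup\{A\to B\}\vdash\Delta$ iff ($\Gamma\vdash\{A\}\cup\Delta$ and $\Gamma\cup\{B\}\vdash\Delta$). *)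

(* Defs.v *)
From mathcomp Require Import all_boot.
From mathcomp Require Import boolp.

Set Implicit Arguments.
Unset Strict Implicit.
Unset Printing Implicit Defensive.

Section Defs.
Variable V : finType.

Definition designated (one zero : V) (D : {set V}) : bool :=
  (one \in D) && (zero \notin D).

Definition mixed (Dp Dc : {set V}) (gamma delta : {set V}) : bool :=
  (gamma \subset Dp) ==> (delta :&: Dc != set0).

Definition representation (one zero : V) (R : {set V} -> {set V} -> bool)
    (L : seq ({set V} * {set V})) : Prop :=
  [/\ 0 < size L,
      all (fun p => designated one zero p.1 && designated one zero p.2) L &
      forall gamma delta, R gamma delta = all (fun p => mixed p.1 p.2 gamma delta) L].

Definition intersective (one zero : V) (R : {set V} -> {set V} -> bool) : Prop :=
  exists L, representation one zero R L.

Definition minimal_representation (one zero : V) (R : {set V} -> {set V} -> bool)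
    (L : seq ({set V} * {set V})) : Prop :=
  representation one zero R L /\
  forall L', representation one zero R L' -> size L <= size L'.

Definition des_list (L : seq ({set V} * {set V})) : seq {set V} :=
  flatten [seq [:: p.1; p.2] | p <- L].

Definition DC1 (L : seq ({set V} * {set V})) : Prop :=
  forall D, D \in des_list L ->
    (exists x, x \in D /\ forall D', D' \in des_list L -> D' != D -> x \notin D')
    \/ (exists D', [/\ D' \in des_list L, D' != D & D \subset D']).

Definition DC2 (L : seq ({set V} * {set V})) : Prop :=
  forall S : seq {set V}, S != [::] -> subseq S (des_list L) ->
    exists x : V, forall D, D \in des_list L ->
      (x \in D <-> exists2 D', D' \in S & D' \subset D).

Definition N1 (L : seq ({set V} * {set V})) : Prop :=
  forall i j, i < size L -> j < size L -> i != j ->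
    ~~ ((nth (set0, set0) L i).1 \subset (nth (set0, set0) L j).1) /\
    ~~ ((nth (set0, set0) L i).2 \subset (nth (set0, set0) L j).2).

Definition N2 (L : seq ({set V} * {set V})) : Prop :=
  forall i j, i < size L -> j < size L ->
    let Dpi := (nth (set0, set0) L i).1 in let Dci := (nth (set0, set0) L i).2 in
    let Dpj := (nth (set0, set0) L j).1 in let Dcj := (nth (set0, set0) L j).2 in
    (Dpi \subset Dcj -> Dpj \subset Dci) /\ (Dcj \subset Dpi -> Dci \subset Dpj).

Definition conditions (L : seq ({set V} * {set V})) : Prop :=
  [/\ DC1 L, DC2 L, N1 L & N2 L].

End Defs.

(* Formulas over a signature Con of connectives (interpreted by truth functions on
   lists of argument values), with an additional binary connective Imp
   (the candidate conditional). *)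
Inductive form (Con : Type) : Type :=
| Atom of nat
| App of Con & seq (form Con)
| Imp of form Con & form Con.

Arguments Atom {Con}.

Fixpoint eval (V : Type) (Con : Type) (interp : Con -> seq V -> V) (f : V -> V -> V)
    (v : nat -> V) (A : form Con) : V :=
  match A with
  | Atom n => v n
  | App c args => interp c (map (eval interp f v) args)
  | Imp A1 A2 => f (eval interp f v A1) (eval interp f v A2)
  end.

Fixpoint imp_free (Con : Type) (A : form Con) : bool :=
  match A with
  | Atom _ => true
  | App _ args => all (@imp_free Con) args
  | Imp _ _ => false
  end.

(* constant expressive: every value is the constant value of some formula
   of the base language (not using Imp, so independent of its interpretation) *)
Definition const_expressive (V : Type) (Con : Type) (interp : Con -> seq V -> V) : Prop :=
  forall x : V, exists A : form Con, imp_free A /\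
    forall (f : V -> V -> V) (v : nat -> V), eval interp f v A = x.

Definition img (V : finType) (Con : Type) (interp : Con -> seq V -> V) (f : V -> V -> V)
    (v : nat -> V) (Gamma : form Con -> Prop) : {set V} :=
  [set x | `[< exists A, Gamma A /\ eval interp f v A = x >]].

Definition entails (V : finType) (Con : Type) (interp : Con -> seq V -> V) (f : V -> V -> V)
    (R : {set V} -> {set V} -> bool) (Gamma Delta : form Con -> Prop) : Prop :=
  forall v : nat -> V, R (img interp f v Gamma) (img interp f v Delta).

Definition addf (Con : Type) (Gamma : form Con -> Prop) (A : form Con) : form Con -> Prop :=
  fun B => Gamma B \/ B = A.

Definition G_conditional (V : finType) (Con : Type) (interp : Con -> seq V -> V)
    (f : V -> V -> V) (R : {set V} -> {set V} -> bool) : Prop :=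
  forall (Gamma Delta : form Con -> Prop) (A B : form Con),
    (entails interp f R Gamma (addf Delta (Imp A B))
       <-> entails interp f R (addf Gamma A) (addf Delta B)) /\
    (entails interp f R (addf Gamma (Imp A B)) Delta
       <-> entails interp f R Gamma (addf Delta A) /\ entails interp f R (addf Gamma B) Delta).

Definition admits_G_conditional (V : finType) (Con : Type) (interp : Con -> seq V -> V)
    (R : {set V} -> {set V} -> bool) : Prop :=
  exists f : V -> V -> V, G_conditional interp f R.

(* Main.v *)
Require Import Defs.
From mathcomp Require Import all_boot.
From mathcomp Require Import boolp.
From mathcomp Require Import zify.

Set Implicit Arguments.
Unset Strict Implicit.
Unset Printing Implicit Defensive.

Local Notation PP L k := (nth (set0, set0) L k).1.
Local Notation CC L k := (nth (set0, set0) L k).2.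

Section Aux.
Variable V : finType.
Implicit Types (L : seq ({set V} * {set V})) (G D X Y P C : {set V}).

Lemma set1I_neq0 (b : V) C : ([set b] :&: C != set0) = (b \in C).
Proof.
apply/set0Pn/idP => [[y]|Hb]; first by rewrite !inE => /andP[/eqP-> ->].
by exists b; rewrite !inE eqxx Hb.
Qed.

Lemma setU1_meet D (b : V) C :
  ((D :|: [set b]) :&: C != set0) = (D :&: C != set0) || (b \in C).
Proof. by rewrite setIUl setU_eq0 negb_and set1I_neq0. Qed.

Lemma setU1_sub G (a : V) P : (G :|: [set a] \subset P) = (G \subset P) && (a \in P).
Proof. by rewrite subUset sub1set. Qed.

Definition spec L (a b c : V) := forall k, k < size L ->
  (c \in CC L k) = ((a \in PP L k) ==> (b \in CC L k)) /\
  (c \in PP L k) = ((a \in CC L k) ==> (b \in PP L k)).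

Definition allm L G D := all (fun p => mixed p.1 p.2 G D) L.

Lemma value_I L a b c G D : spec L a b c ->
  allm L G (D :|: [set c]) = allm L (G :|: [set a]) (D :|: [set b]).
Proof.
move=> Hs; apply/(all_nthP (set0, set0))/(all_nthP (set0, set0)) => H k Hk; move: (H k Hk) (Hs k Hk);
rewrite /= /mixed !setU1_sub !setU1_meet => H1 [E1 E2]; move: H1; rewrite ?E1 ?E2;
by case: (G \subset _); case: (a \in _); case: (b \in _); case: (_ != _).
Qed.

Lemma value_II L a b c G D : spec L a b c ->
  allm L (G :|: [set c]) D = allm L G (D :|: [set a]) && allm L (G :|: [set b]) D.
Proof.
move=> Hs; rewrite /allm -all_predI; apply/(all_nthP (set0, set0))/(all_nthP (set0, set0)) => H k Hk;
move: (H k Hk) (Hs k Hk); rewrite /= /mixed !setU1_sub !setU1_meet => H1 [E1 E2]; move: H1; rewrite ?E2;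
by case: (G \subset _); case: (a \in _); case: (b \in _); case: (_ != _).
Qed.

End Aux.

Lemma nth_in_rem (T : eqType) (x0 : T) s1 x s2 j : j < size (s1 ++ x :: s2) -> j != size s1 ->
  nth x0 (s1 ++ x :: s2) j \in s1 ++ s2.
Proof.
move=> Hj Hne; rewrite nth_cat mem_cat.
case: ifP => Hlt; first by rewrite mem_nth.
case E: (j - size s1) => [|m].
  by move: Hne Hlt E => /eqP; lia.
rewrite /= mem_nth ?orbT //.
move: Hj Hlt E; rewrite size_cat /=; lia.
Qed.

Section Aux2.
Variable V : finType.
Implicit Types (L : seq ({set V} * {set V})) (G D X Y P C : {set V}).

Lemma mixed_weak P C P' C' G D : P \subset P' -> C' \subset C ->
  mixed P' C' G D -> mixed P C G D.
Proof.
move=> HP HC; rewrite /mixed => /implyP H; apply/implyP => HG.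
have /set0Pn [y] := H (subset_trans HG HP); rewrite inE => /andP[yD yC'].
by apply/set0Pn; exists y; rewrite inE yD (subsetP HC).
Qed.

Lemma remove_one (one zero : V) R s1 s2 x y :
  representation one zero R (s1 ++ x :: s2) -> y \in s1 ++ s2 ->
  (forall G D, mixed y.1 y.2 G D -> mixed x.1 x.2 G D) ->
  representation one zero R (s1 ++ s2).
Proof.
case=> _ Hd HR Hy Hm; split.
- by case: (s1 ++ s2) Hy.
- by move: Hd; rewrite !all_cat /= => /and3P[-> _ ->].
- move=> G D; rewrite HR !all_cat /=.
  case: (boolP (all (fun p => mixed p.1 p.2 G D) (s1 ++ s2))) => E.
    move: (E); rewrite all_cat => /andP[-> ->]; rewrite !andbT; apply: Hm.
    by move/allP: E => /(_ y Hy).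
  move: E; rewrite all_cat.
  by case: (all _ s1); case: (all _ s2); rewrite /= ?andbF.
Qed.

Lemma min_antichain (one zero : V) R L : minimal_representation one zero R L ->
  forall i j, i < size L -> j < size L -> i != j ->
  ~~ ((PP L i \subset PP L j) && (CC L j \subset CC L i)).
Proof.
move=> [Hrep Hmin] i j Hi Hj Hij; apply/negP => /andP[HP HC].
have HL : L = take i L ++ nth (set0, set0) L i :: drop i.+1 L.
  by rewrite -(drop_nth _ Hi) cat_take_drop.
have Hs1 : size (take i L) = i by rewrite size_take Hi.
have Hy : nth (set0, set0) L j \in take i L ++ drop i.+1 L.
  rewrite {1}HL; apply: nth_in_rem; first by rewrite -HL.
  by rewrite Hs1 eq_sym.
move: Hrep; rewrite {1}HL => Hrep.
have := remove_one Hrep Hy (fun G D => @mixed_weak _ _ _ _ G D HP HC).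
move=> /Hmin; rewrite size_cat Hs1 size_drop; lia.
Qed.

End Aux2.

Section Aux3.
Variable V : finType.
Implicit Types (L : seq ({set V} * {set V})) (G D X Y P C : {set V}).

Definition antichain L := forall i j, i < size L -> j < size L -> i != j ->
  ~~ ((PP L i \subset PP L j) && (CC L j \subset CC L i)).

Lemma evalR L k X Y : antichain L -> k < size L ->
  allm L (PP L k :|: X) (~: CC L k :|: Y) = (X \subset PP L k) ==> (Y :&: CC L k != set0).
Proof.
move=> Ha Hk.
have E1 : (PP L k :|: X \subset PP L k) = (X \subset PP L k) by rewrite subUset subxx.
have E2 : (~: CC L k :|: Y) :&: CC L k = Y :&: CC L k by rewrite setIUl [~: _ :&: _]setIC setICr set0U.
apply/(all_nthP (set0, set0))/idP => [/(_ k Hk)|H j Hj]; rewrite /= /mixed ?E1 ?E2 //.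
case: (eqVneq j k) => [->|Hjk]; first by rewrite E1 E2.
apply/implyP => Hsub.
have HPk : PP L k \subset PP L j by apply: subset_trans Hsub; apply: subsetUl.
have := Ha k j Hk Hj; rewrite eq_sym Hjk HPk /= => /(_ isT) /subsetPn [y yCj yCk].
by apply/set0Pn; exists y; rewrite !inE yCj yCk.
Qed.

Lemma spec_of_laws L (g : V -> V -> V) : antichain L ->
  (forall G D a b, allm L G (D :|: [set g a b]) = allm L (G :|: [set a]) (D :|: [set b])) ->
  (forall G D a b, allm L (G :|: [set g a b]) D = allm L G (D :|: [set a]) && allm L (G :|: [set b]) D) ->
  forall a b, spec L a b (g a b).
Proof.
move=> Ha HI HII a b k Hk.
have eXY X Y := evalR X Y Ha Hk.
have eX0 X : allm L (PP L k :|: X) (~: CC L k) = ~~ (X \subset PP L k).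
  by have := eXY X set0; rewrite setU0 set0I eqxx => ->; case: (_ \subset _).
have e0Y Y : allm L (PP L k) (~: CC L k :|: Y) = (Y :&: CC L k != set0).
  by have := eXY set0 Y; rewrite setU0 sub0set.
split.
- by have := HI (PP L k) (~: CC L k) a b; rewrite e0Y eXY sub1set !set1I_neq0.
- have := HII (PP L k) (~: CC L k) a b.
  rewrite !eX0 e0Y !sub1set !set1I_neq0.
  by case: (_ \in PP L k); case: (a \in _); case: (b \in _).
Qed.

End Aux3.

Section Aux4.
Variable V : finType.
Implicit Types (L : seq ({set V} * {set V})) (G D X Y P C : {set V}).

Lemma mem_des L D : D \in des_list L -> exists2 k, k < size L & D = PP L k \/ D = CC L k.
Proof.
move/flatten_mapP => [p /(nthP (set0, set0)) [k Hk <-]]; rewrite !inE => /orP[] /eqP ->.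
  by exists k => //; left.
by exists k => //; right.
Qed.

Lemma des_P L k : k < size L -> PP L k \in des_list L.
Proof. by move=> Hk; apply/flatten_mapP; exists (nth (set0, set0) L k); rewrite ?mem_nth // inE eqxx. Qed.

Lemma des_C L k : k < size L -> CC L k \in des_list L.
Proof. by move=> Hk; apply/flatten_mapP; exists (nth (set0, set0) L k); rewrite ?mem_nth // !inE eqxx orbT. Qed.

Lemma des_of_all (one zero : V) L :
  all (fun p => designated one zero p.1 && designated one zero p.2) L ->
  forall D, D \in des_list L -> (one \in D) && (zero \notin D).
Proof.
move=> /allP H D /flatten_mapP [p /H /andP [H1 H2]]; rewrite !inE => /orP[] /eqP ->.
  exact: H1.
exact: H2.
Qed.

Lemma conds_of_spec (one zero : V) L (g : V -> V -> V) :
  all (fun p => designated one zero p.1 && designated one zero p.2) L ->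
  antichain L -> (forall a b, spec L a b (g a b)) -> conditions L.
Proof.
move=> Hdall Ha Hg.
have Hd := des_of_all Hdall.
have z_C k : k < size L -> zero \notin CC L k by move=> Hk; case/andP: (Hd _ (des_C Hk)).
have z_P k : k < size L -> zero \notin PP L k by move=> Hk; case/andP: (Hd _ (des_P Hk)).
pose neg a := g a zero.
have negC a k : k < size L -> (neg a \in CC L k) = ~~ (a \in PP L k).
  by move=> Hk; case: (Hg a zero k Hk) => -> _; rewrite (negbTE (z_C k Hk)) implybF.
have negPP a k : k < size L -> (neg a \in PP L k) = ~~ (a \in CC L k).
  by move=> Hk; case: (Hg a zero k Hk) => _ ->; rewrite (negbTE (z_P k Hk)) implybF.
pose or a b := g (neg a) b.
have orC a b k : k < size L -> (or a b \in CC L k) = (a \in CC L k) || (b \in CC L k).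
  by move=> Hk; case: (Hg (neg a) b k Hk) => -> _; rewrite negPP //; case: (a \in _).
have orPP a b k : k < size L -> (or a b \in PP L k) = (a \in PP L k) || (b \in PP L k).
  by move=> Hk; case: (Hg (neg a) b k Hk) => _ ->; rewrite negC //; case: (a \in _).
pose and a b := neg (or (neg a) (neg b)).
have orD a b D : D \in des_list L -> (or a b \in D) = (a \in D) || (b \in D).
  by move=> /mem_des [k Hk [] ->]; [apply: orPP | apply: orC].
have andD a b D : D \in des_list L -> (and a b \in D) = (a \in D) && (b \in D).
  move=> /mem_des [k Hk [] ->].
    by rewrite /and negPP // orC // !negC // negb_or !negbK.
  by rewrite /and negC // orPP // !negPP // negb_or !negbK.
pose u (D' : {set V}) := foldr and one (enum D').
have uD D' D : D \in des_list L -> (u D' \in D) = (D' \subset D).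
  move=> HD; have -> : (u D' \in D) = all (fun y => y \in D) (enum D').
    rewrite /u; elim: (enum D') => [|y s IH] /=; first by case/andP: (Hd D HD).
    by rewrite andD // IH.
  apply/allP/subsetP => H y; last by move=> Hy; apply: H; rewrite -mem_enum.
  by move=> Hy; apply: H; rewrite mem_enum.
split.
- move=> D HD; case: (EM (exists D', [/\ D' \in des_list L, D' != D & D \subset D'])).
    by right.
  move=> Hno; left; exists (u D); split; first by rewrite uD // subxx.
  move=> D' HD' Hne; rewrite uD //; apply/negP => Hs; apply: Hno; exists D'; split => //.
- move=> S _ _; exists (foldr or zero (map u S)) => D HD.
  have -> : (foldr or zero (map u S) \in D) = has (fun D' => D' \subset D) S.
    elim: S => [|D' S IH] /=; first by case/andP: (Hd D HD) => _ /negbTE.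
    by rewrite orD // IH uD.
  by split => [/hasP [D' H1 H2]|[D' H1 H2]]; [exists D'|apply/hasP; exists D'].
- move=> i j Hi Hj Hij; split; apply/negP => Hs.
    have := Ha i j Hi Hj Hij; rewrite Hs /= => /subsetPn [y yCj yCi].
    have : neg y \in PP L i by rewrite negPP.
    by move/(subsetP Hs); rewrite negPP // yCj.
  have := Ha j i Hj Hi; rewrite eq_sym Hij Hs andbT => /(_ isT) /subsetPn [y yPj yPi].
  have : neg y \in CC L i by rewrite negC.
  by move/(subsetP Hs); rewrite negC // yPj.
- move=> i j Hi Hj /=; split => Hs; apply/subsetP => y Hy; apply/negPn/negP => Hy'.
    have : neg y \in PP L i by rewrite negPP.
    by move/(subsetP Hs); rewrite negC // Hy.
  have : neg y \in CC L j by rewrite negC.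
  by move/(subsetP Hs); rewrite negPP // Hy.
Qed.

End Aux4.

Lemma flatten_sub (A : Type) (T : eqType) (f g : A -> seq T) (s : seq A) :
  (forall x, subseq (f x) (g x)) -> subseq (flatten (map f s)) (flatten (map g s)).
Proof. by move=> H; elim: s => //= x s IH; apply: cat_subseq. Qed.

Section Aux5.
Variable V : finType.
Implicit Types (L : seq ({set V} * {set V})) (G D X Y P C : {set V}).

Lemma spec_exists (one zero : V) L :
  all (fun p => designated one zero p.1 && designated one zero p.2) L ->
  DC2 L -> N1 L -> N2 L -> forall a b, exists c, spec L a b c.
Proof.
move=> Hdall H2 HN1 HN2 a b.
have Hd := des_of_all Hdall.
pose tP (p : {set V} * {set V}) := (a \in p.2) ==> (b \in p.1).
pose tC (p : {set V} * {set V}) := (a \in p.1) ==> (b \in p.2).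
pose S := flatten [seq (if tP p then [:: p.1] else [::]) ++ (if tC p then [:: p.2] else [::]) | p <- L].
have HS : subseq S (des_list L).
  apply: flatten_sub => p.
  by case: (tP p); case: (tC p); rewrite ?cat0s ?cats0 ?cat1s ?subseq_refl ?sub1seq ?inE ?eqxx ?orbT.
have memS D : D \in S -> exists2 j, j < size L &
    (tP (nth (set0, set0) L j) /\ D = PP L j) \/ (tC (nth (set0, set0) L j) /\ D = CC L j).
  move/flatten_mapP => [p /(nthP (set0, set0)) [j Hj <-]]; rewrite mem_cat.
  case E1: (tP _); case E2: (tC _); rewrite ?inE //= => H; exists j => //.
  - case/orP: H => /eqP HD; [left|right]; split => //.
  - by left; split => //; apply/eqP; move: H; rewrite ?orbF.
  - by right; split => //; apply/eqP; move: H; rewrite ?orbF.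
have S_P k : k < size L -> tP (nth (set0, set0) L k) -> PP L k \in S.
  move=> Hk Ht; apply/flatten_mapP; exists (nth (set0, set0) L k); first by rewrite mem_nth.
  by rewrite mem_cat Ht inE eqxx.
have S_C k : k < size L -> tC (nth (set0, set0) L k) -> CC L k \in S.
  move=> Hk Ht; apply/flatten_mapP; exists (nth (set0, set0) L k); first by rewrite mem_nth.
  by rewrite mem_cat Ht inE eqxx orbT.
have [x Hx] : exists x, forall D, D \in des_list L ->
    (x \in D <-> exists2 D', D' \in S & D' \subset D).
  case ES: S => [|D0 S'].
    exists zero => D HD; split; last by case.
    by case/andP: (Hd D HD) => _ /negP.
  by apply: H2; rewrite -ES // ES.
exists x => k Hk; split.
- apply/idP/idP.
    move/(Hx _ (des_C Hk)) => [D' /memS [j Hj [[Ht ->]|[Ht ->]]] Hsub].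
      have [/(_ Hsub) HPk _] := HN2 j k Hj Hk.
      apply/implyP => aP; move/implyP: Ht => /(_ (subsetP HPk a aP)) bP.
      exact: (subsetP Hsub).
    case: (eqVneq j k) => [<- //|Hjk].
    by have [_] := HN1 j k Hj Hk Hjk; rewrite Hsub.
  by move=> Ht; apply/(Hx _ (des_C Hk)); exists (CC L k) => //; apply: S_C.
- apply/idP/idP.
    move/(Hx _ (des_P Hk)) => [D' /memS [j Hj [[Ht ->]|[Ht ->]]] Hsub].
      case: (eqVneq j k) => [<- //|Hjk].
      by have [] := HN1 j k Hj Hk Hjk; rewrite Hsub.
    have [_ /(_ Hsub) HCk] := HN2 k j Hk Hj.
    apply/implyP => aC; move/implyP: Ht => /(_ (subsetP HCk a aC)) bC.
    exact: (subsetP Hsub).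
  by move=> Ht; apply/(Hx _ (des_P Hk)); exists (PP L k) => //; apply: S_P.
Qed.

End Aux5.

Lemma exists_minimal (V : finType) (one zero : V) R :
  intersective one zero R -> exists L, minimal_representation one zero R L.
Proof.
case=> L0 H0.
suff : forall n L, size L <= n -> representation one zero R L ->
  exists L, minimal_representation one zero R L by move=> H; apply: (H (size L0) L0).
elim=> [|n IH] L Hs HL.
  by case: HL; move: Hs; rewrite leqn0 => /eqP ->.
case: (EM (exists L', representation one zero R L' /\ size L' < size L)).
  by case=> L' [HL' Hlt]; apply: (IH L') => //; rewrite -ltnS (leq_trans Hlt).
move=> Hno; exists L; split => // L' HL'; rewrite leqNgt; apply/negP => Hlt.
by apply: Hno; exists L'.
Qed.

Lemma img_addf (V : finType) (Con : Type) (interp : Con -> seq V -> V) f v G A :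
  img interp f v (addf G A) = img interp f v G :|: [set eval interp f v A].
Proof.
apply/setP => x; rewrite !inE; apply/asboolP/orP.
  by case=> B [[HB|->] <-]; [left; apply/asboolP; exists B|right].
case=> [/asboolP [B [HB <-]]|/eqP ->]; first by exists B; split => //; left.
by exists A; split => //; right.
Qed.

Lemma R_I (V : finType) R (L : seq ({set V} * {set V})) a b c G D :
  (forall G D, R G D = allm L G D) -> spec L a b c ->
  R G (D :|: [set c]) = R (G :|: [set a]) (D :|: [set b]).
Proof. by move=> HR Hs; rewrite !HR; apply: value_I. Qed.

Lemma R_II (V : finType) R (L : seq ({set V} * {set V})) a b c G D :
  (forall G D, R G D = allm L G D) -> spec L a b c ->
  R (G :|: [set c]) D = R G (D :|: [set a]) && R (G :|: [set b]) D.
Proof. by move=> HR Hs; rewrite !HR; apply: value_II. Qed.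

Theorem theorem7p9 (V : finType) (one zero : V) (Hneq : one != zero)
    (Con : Type) (interp : Con -> seq V -> V) (Hce : const_expressive interp)
    (R : {set V} -> {set V} -> bool) (HR : intersective one zero R) :
  admits_G_conditional interp R <->
  (forall L, minimal_representation one zero R L -> conditions L).
Proof.
split.
- case=> f Hg L Hmin.
  have Ha : antichain L by move=> i j Hi Hj Hij; apply: (min_antichain Hmin).
  case: (Hmin) => [[_ Hdall HR0] _].
  pose cst x := sval (cid (Hce x)).
  have Hcst x f' v : eval interp f' v (cst x) = x by case: (svalP (cid (Hce x))) => _ ->.
  pose Gam (g : {set V}) := fun A : form Con => exists2 x, x \in g & A = cst x.
  have img_Gam g v : img interp f v (Gam g) = g.
    apply/setP => x; rewrite inE; apply/asboolP/idP => [[B [[y Hy ->] <-]]|Hx].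
      by rewrite Hcst.
    by exists (cst x); split; [exists x|apply: Hcst].
  have EI a b v : eval interp f v (Imp (cst a) (cst b)) = f a b by rewrite /= !Hcst.
  have all1 (P : bool) : (forall v : nat -> V, P) <-> P by split => // /(_ (fun _ => one)).
  apply: (conds_of_spec Hdall Ha (g := f)); apply: spec_of_laws => // G D a b; rewrite /allm -!HR0.
  + have [H1 _] := Hg (Gam G) (Gam D) (cst a) (cst b).
    move: H1; rewrite /entails.
    under [X in X <-> _]eq_forall => v do rewrite img_addf EI !img_Gam.
    under [X in _ <-> X]eq_forall => v do rewrite !img_addf !Hcst !img_Gam.
    by rewrite !all1 => H; apply/idP/idP => /H.
  + have [_ H2] := Hg (Gam G) (Gam D) (cst a) (cst b).
    move: H2; rewrite /entails.
    under [X in X <-> _]eq_forall => v do rewrite img_addf EI !img_Gam.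
    under [X in _ <-> _ /\ X]eq_forall => v do rewrite !img_addf !Hcst !img_Gam.
    under [X in _ <-> X /\ _]eq_forall => v do rewrite !img_addf !Hcst !img_Gam.
    by rewrite !all1 => H; apply/idP/andP => /H.
- move=> Hc.
  have [L0 Hmin] := exists_minimal HR.
  have [_ H2 HN1 HN2] := Hc L0 Hmin.
  case: (Hmin) => [[_ Hdall HR0] _].
  have Hex := spec_exists Hdall H2 HN1 HN2.
  pose f a b := sval (cid (Hex a b)).
  have Hf a b : spec L0 a b (f a b) := svalP (cid (Hex a b)).
  exists f => Gamma Delta A B; split.
  + rewrite /entails; split => H v; move: (H v); rewrite !img_addf /=;
    by rewrite (R_I _ _ HR0 (Hf _ _)).
  + rewrite /entails; split => [H|[H1 H2'] v].
      split => v; move: (H v); rewrite !img_addf /= (R_II _ _ HR0 (Hf _ _));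
      by case/andP.
    move: (H1 v) (H2' v); rewrite !img_addf /= (R_II _ _ HR0 (Hf _ _)).
    by move=> -> ->.
Qed.
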